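(* Let $m<n$ and $1\le k\le n$. Then $$\chi(X(k,n,m))=\sum_{k_1+k_2=k}t^{k_2(m-k_1)+\frac12k_2(n-m-k_2)}\chi_{\Lambda^{k_2}(\mathbb{C}^{n-m})}(t^{\rho_{n-m}})\,\chi(X^\vee(k_1,n,m)),$$ where terms involving empty spaces are omitted.
   Context: For a $k$-dimensional space $K$: $X(k,n,m)=\{(I,J)\in\mathrm{Hom}(\mathbb{C}^m_x,K)\oplus\mathrm{Hom}^{\mathrm{st}}(K,\mathbb{C}^n_y)\}/GL(K)$ with $J$ injective, and $X^\vee(k_1,n,m)$ is defined the same way with $\dim K=k_1$ but with the stability on $I$ (i.e. $I:\mathbb{C}^m_x\to K$ surjective, $J$ arbitrary). $\chi(Y)=\chi(Y,\sum_i(-t)^i\Omega^i_Y)$ is the Hirzebruch genus, equivariant for $\mathbb{C}^\times_q\times T_x\times T_y$ ($T_x\subset GL_m$, $T_y\subset GL_n$ maximal tori), defined by localization as a rational function; $\mathbb{C}^\times_q$ scales $\mathrm{Hom}(\mathbb{C}^m_x,K)$ with weight $+1$ and acts trivially on $\mathrm{Hom}(K,\mathbb{C}^n_y)$. $\rho_N=\mathrm{diag}(\frac{N-1}{2},\dots,\frac{1-N}{2})$ and $\chi_{\Lambda^{j}(\mathbb{C}^N)}(t^{\rho_N})$ is the character of $\Lambda^j(\mathbb{C}^N)$ at $\mathrm{diag}(t^{(N-1)/2},\dots,t^{(1-N)/2})$. *)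

(* Defs.v *)
From HB Require Import structures.
From mathcomp Require Import all_boot all_order all_algebra.
Unset Printing Implicit Defensive.
Import Order.TTheory GRing.Theory Num.Theory.
Local Open Scope ring_scope.

(* Everything lives in an arbitrary field F;
   the equivariant parameters are  q (for C^x_q), x_i (T_x, i < m),
   y_j (T_y, j < n) and s = t^(1/2) (so t = s^2).
   The torus acts on (I,J) by  I |-> q * I * x^{-1},  J |-> y * J.
   Localization contribution of a tangent weight w (character of T_pY):
       ch(Lambda_{-t} T^*_p) / ch(Lambda_{-1} T^*_p) factor
     = (1 - t w^{-1}) / (1 - w^{-1}). *)
Definition hfac {F : fieldType} (t w : F) : F := (1 - t / w) / (1 - w^-1).

(* X(k,n,m): fixed points are the coordinate k-subspaces K = C^S of C^n,
   S subset of [n], |S| = k (with I = 0); tangent weights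
   q y_s / x_i  (Hom(C^m,K))  and  y_j / y_s, j notin S  (T Gr(k,n)). *)
Definition chiX {F : fieldType} (k n m : nat) (t q : F)
    (x : 'I_m -> F) (y : 'I_n -> F) : F :=
  \sum_(S : {set 'I_n} | #|S| == k)
     \prod_(a in S) ((\prod_(i < m) hfac t (q * y a / x i)) *
                     (\prod_(j in ~: S) hfac t (y j / y a))).

(* X^vee(k1,n,m): fixed points are the coordinate quotients C^m ->> C^T,
   T subset of [m], |T| = k1 (with J = 0); tangent weights
   x_a / x_i, i notin T  (quotient Grassmannian)  and  q y_j / x_a
   (Hom(K, C^n)). *)
Definition chiXv {F : fieldType} (k1 n m : nat) (t q : F)
    (x : 'I_m -> F) (y : 'I_n -> F) : F :=
  \sum_(T : {set 'I_m} | #|T| == k1)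
     \prod_(a in T) ((\prod_(i in ~: T) hfac t (x a / x i)) *
                     (\prod_(j < n) hfac t (q * y j / x a))).

(* character of Lambda^j(C^N) at t^{rho_N} = diag(s^(N-1), s^(N-3), ..., s^(1-N)),
   i.e. the j-th elementary symmetric function of these N values. *)
Definition chiLambda_rho {F : fieldType} (N j : nat) (s : F) : F :=
  \sum_(A : {set 'I_N} | #|A| == j)
     \prod_(i in A) s ^ ((N%:Z - 1) - 2 * (i : nat)%:Z).

(* Main.v *)
Require Import Defs.
From HB Require Import structures.
From mathcomp Require Import all_boot all_order all_algebra.
From mathcomp Require Import ring zify.
Import Order.TTheory GRing.Theory Num.Theory.
Local Open Scope ring_scope.
Set Implicit Arguments. Unset Strict Implicit. Unset Printing Implicit Defensive.

Section PF.
Variable F : fieldType.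

Definition mob (c d p w : F) := c + d / (w - p).

Lemma pf_seq (R : eqType) (be : R -> F) (c d : R -> F) (s : seq R) :
  uniq s -> {in s &, injective be} ->
  forall w, (forall r, r \in s -> d r != 0 -> w != be r) ->
  \prod_(r <- s) mob (c r) (d r) (be r) w =
  \prod_(r <- s) c r +
  \sum_(r <- s) d r * (\prod_(j <- s | j != r) mob (c j) (d j) (be j) (be r)) / (w - be r).
Proof.
elim: s => [|x s IH] /=; first by move=> *; rewrite !big_nil addr0.
move=> /andP[xs us] inj w hw.
have injs : {in s &, injective be}.
  by move=> a b ha hb; apply: inj; rewrite inE ?ha ?hb orbT.
rewrite !big_cons IH //; last by move=> r rs; apply: hw; rewrite inE rs orbT.
rewrite eqxx /=.
have -> : \prod_(j <- s | j != x) mob (c j) (d j) (be j) (be x) =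
          \prod_(j <- s) mob (c j) (d j) (be j) (be x).
  rewrite [LHS]big_seq_cond [RHS]big_seq; apply: eq_bigl => j.
  case: (boolP (j \in s)) => // js /=; apply/negP => /eqP ej.
  by rewrite -ej js in xs.
rewrite IH //; last first.
  move=> r rs _; apply/eqP => e.
  have rxs : r \in x :: s by rewrite inE rs orbT.
  have ex := inj _ _ (mem_head _ _) rxs e.
  by rewrite ex rs in xs.
set C := \prod_(j <- s) c j.
have E1 : \sum_(r <- s) d r * (\prod_(j <- (x :: s) | j != r) mob (c j) (d j) (be j) (be r)) / (w - be r)
   = \sum_(r <- s) d r * (mob (c x) (d x) (be x) (be r) * \prod_(j <- s | j != r) mob (c j) (d j) (be j) (be r)) / (w - be r).
  rewrite big_seq [RHS]big_seq; apply: eq_bigr => r rs.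
  rewrite big_cons; case: eqP => // exr.
  by rewrite exr rs in xs.
set mx := mob (c x) (d x) (be x).
have key : forall r, r \in s ->
  mx w * (d r * (\prod_(j <- s | j != r) mob (c j) (d j) (be j) (be r)) / (w - be r)) =
  d x / (w - be x) * (d r * (\prod_(j <- s | j != r) mob (c j) (d j) (be j) (be r)) / (be x - be r))
  + d r * (mx (be r) * (\prod_(j <- s | j != r) mob (c j) (d j) (be j) (be r))) / (w - be r).
  move=> r rs.
  set P := \prod_(j <- s | j != r) _.
  have hxr : be x != be r.
    apply/eqP => e.
    have rxs : r \in x :: s by rewrite inE rs orbT.
    have ex := inj _ _ (mem_head _ _) rxs e.
    by rewrite ex rs in xs.
  rewrite /mx /mob.
  have [dx0|dxn] := eqVneq (d x) 0.
    by rewrite dx0; ring.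
  have [dr0|drn] := eqVneq (d r) 0.
    by rewrite dr0; ring.
  have hwx : w - be x != 0 by rewrite subr_eq0; apply: hw; rewrite ?mem_head.
  have hwr : w - be r != 0 by rewrite subr_eq0; apply: hw; rewrite ?inE ?rs ?orbT.
  have hxr' : be r - be x != 0 by rewrite subr_eq0 eq_sym.
  have hxr'' : be x - be r != 0 by rewrite subr_eq0.
  by field; rewrite hwx hwr hxr' hxr''.
rewrite E1 mulrDr big_distrr /=.
rewrite big_seq (eq_bigr _ key) -big_seq big_split /= -big_distrr /=.
have -> : mx w = c x + d x / (w - be x) by [].
rewrite /mx; ring.
Qed.
End PF.

Section PF2.
Variable F : fieldType.
Lemma pf (R : finType) (be : R -> F) (c d : R -> F) w :
  injective be -> (forall r, d r != 0 -> w != be r) ->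
  \prod_r mob (c r) (d r) (be r) w =
  \prod_r c r +
  \sum_r d r * (\prod_(j | j != r) mob (c j) (d j) (be j) (be r)) / (w - be r).
Proof.
move=> inj hw; apply: pf_seq; first exact: index_enum_uniq.
  by move=> a b _ _; apply: inj.
by move=> r _; apply: hw.
Qed.
End PF2.

Section Defs2.
Variable F : fieldType.

Definition rho (t u v : F) := (u - t * v) / (u - v).

Definition termF t (I J : finType) (y : I -> F) (z : J -> F)
   (A : {set I}) (B : {set J}) (S : {set I}) : F :=
  \prod_(a in S) ((\prod_(b in A :\: S) rho t (y b) (y a)) *
                  \prod_(v in B) rho t (y a) (z v)).

Definition FF t (I J : finType) (y : I -> F) (z : J -> F)
   (A : {set I}) (B : {set J}) (k : nat) : F :=
  \sum_(S : {set I} | (S \subset A) && (#|S| == k)) termF t y z A B S.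

Definition termG t (I J : finType) (y : I -> F) (z : J -> F)
   (A : {set I}) (B : {set J}) (T : {set J}) : F :=
  \prod_(a in T) ((\prod_(i in B :\: T) rho t (z a) (z i)) *
                  \prod_(b in A) rho t (y b) (z a)).

Definition GG t (I J : finType) (y : I -> F) (z : J -> F)
   (A : {set I}) (B : {set J}) (k : nat) : F :=
  \sum_(T : {set J} | (T \subset B) && (#|T| == k)) termG t y z A B T.

Lemma mobL (t p x : F) : x != p -> mob t ((t - 1) * p) p x = rho t p x.
Proof.
move=> h; rewrite /mob /rho.
have h1 : x - p != 0 by rewrite subr_eq0.
have h2 : p - x != 0 by rewrite subr_eq0 eq_sym.
by field; rewrite h1 h2.
Qed.

Lemma mobR (t p x : F) : x != p -> mob 1 ((1 - t) * p) p x = rho t x p.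
Proof.
move=> h; rewrite /mob /rho.
have h1 : x - p != 0 by rewrite subr_eq0.
by field; rewrite h1.
Qed.

Lemma mob0 (c p x : F) : mob c 0 p x = c.
Proof. by rewrite /mob mul0r addr0. Qed.

Lemma prod_mobL t (X : finType) (P Q : pred X) (p : X -> F) x :
  (forall i, P i -> Q i -> x != p i) ->
  \prod_(i | P i) mob (if Q i then t else 1) (if Q i then (t - 1) * p i else 0) (p i) x
  = \prod_(i | P i && Q i) rho t (p i) x.
Proof.
move=> h; rewrite [RHS]big_mkcondr /=; apply: eq_bigr => i Pi.
by case: ifP => Qi; [rewrite mobL // h | rewrite mob0].
Qed.

Lemma prod_mobR t (X : finType) (P Q : pred X) (p : X -> F) x :
  (forall i, P i -> Q i -> x != p i) ->
  \prod_(i | P i) mob 1 (if Q i then (1 - t) * p i else 0) (p i) x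
  = \prod_(i | P i && Q i) rho t x (p i).
Proof.
move=> h; rewrite [RHS]big_mkcondr /=; apply: eq_bigr => i Pi.
by case: ifP => Qi; [rewrite mobR // h | rewrite mob0].
Qed.

Lemma reindex_in (T : finType) (A : {set T}) x k (f : {set T} -> F) :
  x \in A ->
  \sum_(S : {set T} | ((S \subset A) && (#|S| == k.+1)) && (x \in S)) f S =
  \sum_(S : {set T} | (S \subset A :\ x) && (#|S| == k)) f (x |: S).
Proof.
move=> xA.
rewrite (reindex_onto (fun S => x |: S) (fun S => S :\ x)); last first.
  by move=> S /andP[_ xS]; rewrite setD1K.
apply: eq_bigl => S.
case: (boolP (x \in S)) => xS.
  rewrite subsetD1 xS andbF /=.
  apply/negP => /andP[_ /eqP h].
  have : x \in (x |: S) :\ x by rewrite h.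
  by rewrite !inE eqxx.
rewrite setU1K // eqxx andbT setU11 andbT cardsU1 xS /= eqSS.
by rewrite subsetD1 xS andbT subUset sub1set xA.
Qed.

Lemma reindex_out (T : finType) (A : {set T}) x k (f : {set T} -> F) :
  \sum_(S : {set T} | ((S \subset A) && (#|S| == k)) && (x \notin S)) f S =
  \sum_(S : {set T} | (S \subset A :\ x) && (#|S| == k)) f S.
Proof.
apply: eq_bigl => S; rewrite subsetD1.
by case: (S \subset A); case: (x \in S); case: (#|S| == k).
Qed.

Lemma sum_splitx (T : finType) (P : pred {set T}) x (f : {set T} -> F) :
  \sum_(S | P S) f S =
  \sum_(S | P S && (x \in S)) f S + \sum_(S | P S && (x \notin S)) f S.
Proof. rewrite (bigID (fun S : {set T} => x \in S)) //=. Qed.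


Lemma rho_swap t u v : t != 0 -> rho t u v = t * rho t^-1 v u.
Proof.
move=> t0; rewrite /rho.
have [->|huv] := eqVneq u v; first by rewrite !subrr !invr0 !mulr0.
have h1 : u - v != 0 by rewrite subr_eq0.
have h2 : v - u != 0 by rewrite subr_eq0 eq_sym.
by field; rewrite t0 h1 h2.
Qed.

Lemma prod_scal (X : finType) (P : pred X) (t : F) (g : X -> F) :
  \prod_(i in P) (t * g i) = t ^+ #|P| * \prod_(i in P) g i.
Proof. by rewrite big_split /= prodr_const. Qed.

Lemma termF_dual t (I J : finType) (y : I -> F) (z : J -> F) (A : {set I}) (B : {set J}) (S : {set I}) :
  t != 0 ->
  termF t y z A B S = t ^+ (#|S| * (#|A :\: S| + #|B|)) * termG t^-1 z y B A S.
Proof.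
move=> t0; rewrite /termF /termG.
rewrite mulnC exprM -prodr_const -big_split /=; apply: eq_bigr => a _.
under eq_bigr do rewrite rho_swap //.
under [X in _ * X]eq_bigr do rewrite rho_swap //.
by rewrite !prod_scal exprD; ring.
Qed.

Lemma FF_dual t (I J : finType) (y : I -> F) (z : J -> F) (A : {set I}) (B : {set J}) k :
  t != 0 ->
  FF t y z A B k = t ^+ (k * (#|A| - k + #|B|)) * GG t^-1 z y B A k.
Proof.
move=> t0; rewrite /FF /GG big_distrr /=; apply: eq_bigr => S /andP[SA /eqP Sk].
by rewrite termF_dual // cardsDS // Sk.
Qed.

Lemma FF_gt t (I J : finType) (y : I -> F) (z : J -> F) (A : {set I}) (B : {set J}) k :
  (#|A| < k)%N -> FF t y z A B k = 0.
Proof.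
move=> h; rewrite /FF big_pred0 // => S; apply/negP => /andP[SA /eqP Sk].
by move: (subset_leq_card SA); rewrite Sk leqNgt h.
Qed.

Lemma GG_gt t (I J : finType) (y : I -> F) (z : J -> F) (A : {set I}) (B : {set J}) k :
  (#|B| < k)%N -> GG t y z A B k = 0.
Proof.
move=> h; rewrite /GG big_pred0 // => S; apply/negP => /andP[SA /eqP Sk].
by move: (subset_leq_card SA); rewrite Sk leqNgt h.
Qed.

Lemma FF0 t (I J : finType) (y : I -> F) (z : J -> F) (A : {set I}) (B : {set J}) :
  FF t y z A B 0 = 1.
Proof.
rewrite /FF (big_pred1 set0) ?/termF ?big_set0 // => S.
by rewrite cards_eq0 andb_idl // => /eqP ->; rewrite sub0set.
Qed.

Lemma GG0 t (I J : finType) (y : I -> F) (z : J -> F) (A : {set I}) (B : {set J}) :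
  GG t y z A B 0 = 1.
Proof.
rewrite /GG (big_pred1 set0) ?/termG ?big_set0 // => S.
by rewrite cards_eq0 andb_idl // => /eqP ->; rewrite sub0set.
Qed.

End Defs2.

Section YStep.
Variables (F : fieldType) (t : F) (I J : finType) (y : I -> F) (z : J -> F).
Hypotheses (injy : injective y) (injz : injective z) (yz : forall i j, y i != z j).
Variables (A : {set I}) (B : {set J}) (c : I).
Hypothesis cA : c \in A.

Definition be (r : I + J) : F := match r with inl i => y i | inr j => z j end.

Lemma inj_be : injective be.
Proof.
case=> [i|j] [i'|j'] /= e.
- by rewrite (injy e).
- by move: (yz i j'); rewrite e eqxx.
- by move: (yz i' j); rewrite e eqxx.
- by rewrite (injz e).
Qed.

Definition cS (S : {set I}) (r : I + J) : F :=
  if c \in S then match r with inl b => if b \in A :\: S then t else 1 | inr _ => 1 end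
  else 1.
Definition dS (S : {set I}) (r : I + J) : F :=
  if c \in S then
    match r with
    | inl b => if b \in A :\: S then (t - 1) * y b else 0
    | inr v => if v \in B then (1 - t) * z v else 0 end
  else match r with inl a => if a \in S then (1 - t) * y a else 0 | inr _ => 0 end.
Definition KS (S : {set I}) : F :=
  if c \in S then termF t y z (A :\ c) B (S :\ c) else termF t y z (A :\ c) B S.
Definition dT (T : {set J}) (r : I + J) : F :=
  match r with inl _ => 0 | inr a => if a \in T then (1 - t) * z a else 0 end.
Definition KT (T : {set J}) : F := termG t y z (A :\ c) B T.

Lemma yne i j : i != j -> y i != y j.
Proof. by apply: contra => /eqP /injy ->. Qed.

Lemma dS_ok S r : dS S r != 0 -> y c != be r.
Proof.
rewrite /dS; case: ifP => cS; case: r => [b|v] /=; try by rewrite yz.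
- case: ifP => [|_]; last by rewrite eqxx.
  rewrite !inE => /andP[bS _] _; apply: yne; apply/eqP => e; by rewrite -e cS in bS.
- case: ifP => [|_]; last by rewrite eqxx.
  move=> bS _; apply: yne; apply/eqP => e; by rewrite -e cS in bS.
Qed.

Lemma dT_ok T r : dT T r != 0 -> y c != be r.
Proof. by case: r => [b|v] /=; [rewrite eqxx | rewrite yz]. Qed.

Lemma repG T : termG t y z A B T = KT T * \prod_r mob 1 (dT T r) (be r) (y c).
Proof.
rewrite /KT /termG big_sumType /=.
rewrite [X in _ * (X * _)]big1 ?mul1r; last by move=> i _; rewrite mob0.
rewrite (@prod_mobR _ t _ _ (fun v => v \in T)); last by move=> i _ _; rewrite yz.
rewrite -big_split /=; apply: eq_bigr => a aT.
by rewrite (big_setD1 c cA) /=; ring.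
Qed.

Lemma setE1 (S : {set I}) : c \in S -> (A :\ c) :\: (S :\ c) = A :\: S.
Proof.
move=> cS; apply/setP => x; rewrite !inE.
by case: (eqVneq x c) => [->|]; rewrite ?cS /=; case: (x \in A); case: (x \in S).
Qed.

Lemma setE2 (S : {set I}) : (A :\: S) :\ c = (A :\ c) :\: S.
Proof.
by apply/setP => x; rewrite !inE; case: (x == c); case: (x \in A); case: (x \in S).
Qed.

Lemma repF S : termF t y z A B S = KS S * \prod_r mob (cS S r) (dS S r) (be r) (y c).
Proof.
rewrite /KS /cS /dS; case: (boolP (c \in S)) => cS.
  rewrite big_sumType /=.
  rewrite (@prod_mobL _ t _ _ (fun b => b \in A :\: S)); last first.
    move=> b _; rewrite !inE => /andP[bS _]; apply: yne; apply/eqP => e.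
    by rewrite -e cS in bS.
  rewrite (@prod_mobR _ t _ _ (fun v => v \in B)); last by move=> i _ _; rewrite yz.
  rewrite /termF (big_setD1 c cS) /= setE1 //.
  rewrite mulrC; congr (_ * _).
rewrite big_sumType /=.
rewrite [X in _ * (_ * X)]big1 ?mulr1; last by move=> i _; rewrite mob0.
rewrite (@prod_mobR _ t _ _ (fun v => v \in S)); last first.
  move=> b _ bS; apply: yne; apply/eqP => e; by rewrite e bS in cS.
have cAS : c \in A :\: S by rewrite inE cS cA.
rewrite /termF -big_split /=; apply: eq_bigr => a aS.
rewrite (big_setD1 c cAS) /= setE2; ring.
Qed.


Lemma swap_term (A' : {set I}) b (S1 : {set I}) :
  b \in A' -> S1 \subset A' -> b \notin S1 ->
  termF t y z A' B S1 * ((\prod_(i in A' :\: (b |: S1)) rho t (y i) (y b)) *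
                         \prod_(v in B) rho t (y b) (z v)) =
  termF t y z A' B (b |: S1) * \prod_(a in S1) rho t (y b) (y a).
Proof.
move=> bA SA bS.
have E2 : (A' :\: S1) :\ b = A' :\: (b |: S1).
  by apply/setP => x; rewrite !inE negb_or andbA [(x != b) && _]andbC.
have E1 : termF t y z A' B S1 = (\prod_(a in S1) rho t (y b) (y a)) *
   \prod_(a in S1) ((\prod_(i in A' :\: (b |: S1)) rho t (y i) (y a)) *
                  \prod_(v in B) rho t (y a) (z v)).
  rewrite /termF -big_split /=; apply: eq_bigr => a aS.
  have bAS : b \in A' :\: S1 by rewrite inE bS bA.
  by rewrite (big_setD1 b bAS) /= E2 mulrA.
rewrite E1 /termF (big_setU1 _ bS) /=; ring.
Qed.

Lemma peel_v (A' : {set I}) v (S0 : {set I}) :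
  S0 \subset A' -> v \in B ->
  termF t y z A' B S0 * \prod_(i in A' :\: S0) rho t (y i) (z v) =
  (\prod_(i in A') rho t (y i) (z v)) * termF t y z A' (B :\ v) S0.
Proof.
move=> SA vB.
rewrite [\prod_(i in A') _](big_setID S0) /= (setIidPr SA).
have -> : termF t y z A' B S0 = termF t y z A' (B :\ v) S0 * \prod_(a in S0) rho t (y a) (z v).
  rewrite /termF -big_split /=; apply: eq_bigr => a _.
  rewrite (big_setD1 v vB) /=; ring.
ring.
Qed.

Lemma peel_T (A' : {set I}) v (T0 : {set J}) :
  T0 \subset B :\ v -> v \in B ->
  termG t y z A' B (v |: T0) * \prod_(a in T0) rho t (z v) (z a) =
  ((\prod_(i in B :\ v) rho t (z v) (z i)) * \prod_(b in A') rho t (y b) (z v)) *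
  termG t y z A' (B :\ v) T0.
Proof.
move=> TB vB.
have vT : v \notin T0 by move: TB; rewrite subsetD1 => /andP[].
have E : (B :\ v) :\: T0 = B :\: (v |: T0).
  by apply/setP => x; rewrite !inE negb_or andbA [(x != v) && _]andbC.
rewrite /termG (big_setU1 _ vT) /= E.
rewrite [\prod_(i in B :\ v) _](big_setID T0) /= (setIidPr TB) E.
ring.
Qed.


Definition PS (S : {set I}) (r : I + J) :=
  \prod_(j | j != r) mob (cS S j) (dS S j) (be j) (be r).
Definition PT (T : {set J}) (r : I + J) :=
  \prod_(j | j != r) mob 1 (dT T j) (be j) (be r).

Lemma regroup (X R : finType) (P : pred X) (K C : X -> F) (D : X -> R -> F) (g : R -> F) :
  \sum_(x | P x) K x * (C x + \sum_r D x r / g r) =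
  \sum_(x | P x) K x * C x + \sum_r (\sum_(x | P x) K x * D x r) / g r.
Proof.
under eq_bigr do rewrite mulrDr.
rewrite big_split /=; congr (_ + _).
under eq_bigr do rewrite big_distrr /=.
rewrite exchange_big /=; apply: eq_bigr => r _.
by rewrite big_distrl /=; apply: eq_bigr => x _; rewrite mulrA.
Qed.

Lemma LHS_exp k :
  FF t y z A B k =
  \sum_(S : {set I} | (S \subset A) && (#|S| == k)) KS S * \prod_r cS S r +
  \sum_r (\sum_(S : {set I} | (S \subset A) && (#|S| == k)) KS S * (dS S r * PS S r))
          / (y c - be r).
Proof.
rewrite /FF.
under eq_bigr => S _ do rewrite repF (@pf _ _ be (cS S) (dS S) (y c) inj_be (@dS_ok S)).
by rewrite regroup.
Qed.

Lemma RHS_exp k (al : nat -> F) :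
  \sum_(k1 < k) al k1 * GG t y z A B k1 =
  \sum_(k1 < k) al k1 * GG t y z (A :\ c) B k1 +
  \sum_r (\sum_(k1 < k) al k1 *
     \sum_(T : {set J} | (T \subset B) && (#|T| == k1)) KT T * (dT T r * PT T r))
          / (y c - be r).
Proof.
rewrite -regroup; apply: eq_bigr => k1 _; congr (_ * _).
rewrite /GG.
under eq_bigr => T _ do rewrite repG (@pf _ _ be (fun=> 1) (dT T) (y c) inj_be (@dT_ok T)).
rewrite regroup; congr (_ + _).
by apply: eq_bigr => T _; rewrite big1_eq mulr1.
Qed.


Lemma constL k :
  \sum_(S : {set I} | (S \subset A) && (#|S| == k.+1)) KS S * \prod_r cS S r =
  FF t y z (A :\ c) B k.+1 + t ^+ (#|A| - k.+1) * FF t y z (A :\ c) B k.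
Proof.
rewrite (sum_splitx _ c) (reindex_in k _ cA) (reindex_out A c k.+1).
rewrite addrC; congr (_ + _).
  apply: eq_bigr => S /andP[SA _].
  have cnS : c \notin S by move: SA; rewrite subsetD1 => /andP[].
  by rewrite /KS /cS (negPf cnS) big1_eq mulr1.
rewrite /FF big_distrr; apply: eq_bigr => S0 /andP[SA /eqP Sk].
have cnS : c \notin S0 by move: SA; rewrite subsetD1 => /andP[].
rewrite /KS /cS setU11 setU1K // big_sumType /= big1_eq mulr1.
rewrite -big_mkcond /= prodr_const mulrC.
have sub : c |: S0 \subset A by rewrite subUset sub1set cA (subset_trans SA) // subD1set.
by rewrite cardsDS // cardsU1 cnS Sk.
Qed.


Lemma pair0 b (S1 : {set I}) : S1 \subset (A :\ c) :\ b -> b \in A :\ c ->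
  KS (c |: S1) * (dS (c |: S1) (inl b) * PS (c |: S1) (inl b)) +
  KS (b |: S1) * (dS (b |: S1) (inl b) * PS (b |: S1) (inl b)) = 0.
Proof.
move=> SA bA.
have [bnS SA'] : b \notin S1 /\ S1 \subset A :\ c.
  by move: SA; rewrite subsetD1 => /andP[-> ->].
have cnS : c \notin S1 by move: SA'; rewrite subsetD1 => /andP[].
have bc : b != c by move: bA; rewrite !inE => /andP[].
have bA0 : b \in A by move: bA; rewrite !inE => /andP[].
have cnbS : c \notin b |: S1 by rewrite !inE negb_or eq_sym bc cnS.
rewrite /KS /dS setU11 setU1K // (negPf cnbS) setU11.
have -> : b \in A :\: (c |: S1) by rewrite !inE negb_or bc bnS bA0.
rewrite /PS /cS /dS setU11 (negPf cnbS) !big_sumType /=.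
rewrite (@prod_mobL _ t _ _ (fun i => i \in A :\: (c |: S1))); last first.
  by move=> i /= ib _; apply: yne; rewrite eq_sym.
rewrite (@prod_mobR _ t _ _ (fun v => v \in B)); last by move=> i _ _; rewrite yz.
rewrite (@prod_mobR _ t _ _ (fun i => i \in b |: S1)); last first.
  by move=> i /= ib _; apply: yne; rewrite eq_sym.
rewrite [X in _ + _ * (_ * (_ * X))]big1 ?mulr1; last by move=> i _; rewrite mob0.
have E1 : \prod_(i | (inl i != inl b :> I + J) && (i \in A :\: (c |: S1))) rho t (y i) (y b) =
          \prod_(i in (A :\ c) :\: (b |: S1)) rho t (y i) (y b).
  apply: eq_bigl => i; have -> : (inl i != inl b :> I + J) = (i != b) by [].
  rewrite !inE !negb_or.
  by case: (i == b); case: (i == c); case: (i \in A); case: (i \in S1).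
have E2 : \prod_(v | true && (v \in B)) rho t (y b) (z v) = \prod_(v in B) rho t (y b) (z v).
  by [].
have E3 : \prod_(i | (inl i != inl b :> I + J) && (i \in b |: S1)) rho t (y b) (y i) =
          \prod_(i in S1) rho t (y b) (y i).
  apply: eq_bigl => i; have -> : (inl i != inl b :> I + J) = (i != b) by [].
  rewrite !inE.
  case: (eqVneq i b) => [->|] //=; by rewrite (negPf bnS).
rewrite E1 E2 E3.
have := swap_term bA SA' bnS.
set P1 := termF _ _ _ _ _ S1.
set P2 := termF _ _ _ _ _ (b |: S1).
set X1 := (\prod_(i in _) _ * _).
move=> H.
have -> : P1 * ((t - 1) * y b * X1) = (t - 1) * y b * (P1 * X1) by ring.
rewrite H; ring.
Qed.


Lemma resL_inl k b :
  \sum_(S : {set I} | (S \subset A) && (#|S| == k.+1)) KS S * (dS S (inl b) * PS S (inl b)) = 0.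
Proof.
rewrite (sum_splitx _ c) (reindex_in k _ cA) (reindex_out A c k.+1).
case: (boolP (b \in A :\ c)) => hb; last first.
  rewrite [X in X + _]big1 ?add0r; last first.
    move=> S /andP[SA _].
    have cnS : c \notin S by move: SA; rewrite subsetD1 => /andP[].
    rewrite /dS setU11; case: ifP; rewrite ?mul0r ?mulr0 //.
    rewrite !inE negb_or => /andP[/andP[bc bS] bA].
    by move: hb; rewrite !inE bc bA.
  apply: big1 => S /andP[SA _].
  have cnS : c \notin S by move: SA; rewrite subsetD1 => /andP[].
  rewrite /dS (negPf cnS).
  case: ifP => bS; rewrite ?mul0r ?mulr0 //.
  by move: hb; rewrite (subsetP SA).
rewrite (sum_splitx _ b) (reindex_out (A :\ c) b k).
rewrite [X in _ + X](sum_splitx _ b) (reindex_in k _ hb).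
rewrite [X in X + _ + _]big1 ?add0r; last first.
  move=> S /andP[_ bS]; rewrite /dS setU11.
  by rewrite ifN ?mul0r ?mulr0 // !inE negb_or bS /= andbF.
rewrite [X in _ + (_ + X)]big1 ?addr0; last first.
  move=> S /andP[/andP[SA _] bS].
  have cnS : c \notin S by move: SA; rewrite subsetD1 => /andP[].
  by rewrite /dS (negPf cnS) (negPf bS) mul0r mulr0.
rewrite -big_split /=; apply: big1 => S /andP[SA _].
exact: pair0.
Qed.


Definition Cv v := (1 - t) * z v * ((\prod_(i in B :\ v) rho t (z v) (z i)) *
                                     \prod_(b in A :\ c) rho t (y b) (z v)).

Lemma resL_inr k v : v \in B ->
  \sum_(S : {set I} | (S \subset A) && (#|S| == k.+1)) KS S * (dS S (inr v) * PS S (inr v))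
  = Cv v * FF t y z (A :\ c) (B :\ v) k.
Proof.
move=> vB.
rewrite (sum_splitx _ c) (reindex_in k _ cA) (reindex_out A c k.+1).
rewrite [X in _ + X]big1 ?addr0; last first.
  move=> S /andP[SA _].
  have cnS : c \notin S by move: SA; rewrite subsetD1 => /andP[].
  by rewrite /dS (negPf cnS) mul0r mulr0.
rewrite /FF big_distrr; apply: eq_bigr => S0 /andP[SA _].
have cnS : c \notin S0 by move: SA; rewrite subsetD1 => /andP[].
rewrite /KS /dS setU11 setU1K // vB.
rewrite /PS /cS /dS setU11 big_sumType /=.
rewrite (@prod_mobL _ t _ _ (fun i => i \in A :\: (c |: S0))); last first.
  by move=> i _ _; rewrite eq_sym yz.
rewrite (@prod_mobR _ t _ _ (fun j => j \in B)); last first.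
  move=> j /= jv _; apply: contra jv => /eqP e; apply/eqP; congr inr.
  by apply: injz; rewrite e.
have E1 : \prod_(i | (inl i != inr v :> I + J) && (i \in A :\: (c |: S0))) rho t (y i) (z v)
   = \prod_(i in (A :\ c) :\: S0) rho t (y i) (z v).
  apply: eq_bigl => i /=; rewrite !inE negb_or.
  by case: (i == c); case: (i \in A); case: (i \in S0).
have E2 : \prod_(j | (inr j != inr v :> I + J) && (j \in B)) rho t (z v) (z j)
   = \prod_(j in B :\ v) rho t (z v) (z j).
  apply: eq_bigl => j; have -> : (inr j != inr v :> I + J) = (j != v) by [].
  by rewrite !inE.
rewrite E1 E2.
have := @peel_v (A :\ c) v S0 SA vB.
set P1 := termF _ _ _ _ _ S0.
set P2 := termF _ _ _ _ _ S0.
move=> H.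
rewrite /Cv.
have -> : P1 * ((1 - t) * z v * (\prod_(i in (A :\ c) :\: S0) rho t (y i) (z v) *
   \prod_(j in B :\ v) rho t (z v) (z j))) =
  (1 - t) * z v * \prod_(j in B :\ v) rho t (z v) (z j) *
   (P1 * \prod_(i in (A :\ c) :\: S0) rho t (y i) (z v)) by ring.
rewrite H; ring.
Qed.


Lemma resR_inr k (al : nat -> F) v : v \in B ->
  \sum_(k1 < k.+2) al k1 *
     \sum_(T : {set J} | (T \subset B) && (#|T| == k1)) KT T * (dT T (inr v) * PT T (inr v))
  = Cv v * \sum_(k1 < k.+1) al k1.+1 * GG t y z (A :\ c) (B :\ v) k1.
Proof.
move=> vB.
rewrite big_ord_recl /=.
rewrite [X in al 0%N * X]big1 ?mulr0 ?add0r; last first.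
  move=> T /andP[_ /eqP T0]; rewrite /dT.
  have -> : T = set0 by apply/eqP; rewrite -cards_eq0 T0.
  by rewrite inE mul0r mulr0.
rewrite big_distrr; apply: eq_bigr => k1 _ /=.
rewrite (sum_splitx _ v) (reindex_in k1 _ vB).
rewrite [X in _ + X]big1 ?addr0; last first.
  by move=> T /andP[_ vT]; rewrite /dT (negPf vT) mul0r mulr0.
rewrite /GG !big_distrr; apply: eq_bigr => T0 /andP[TB _].
rewrite /KT /dT setU11.
rewrite /PT /dT big_sumType /=.
rewrite [X in _ * (_ * (_ * (X * _)))]big1 ?mul1r; last by move=> i _; rewrite mob0.
rewrite /bump leq0n add1n.
rewrite (@prod_mobR _ t _ _ (fun j => j \in v |: T0)); last first.
  move=> j /= jv _; apply: contra jv => /eqP e; apply/eqP; congr inr.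
  by apply: injz; rewrite e.
have vT : v \notin T0 by move: TB; rewrite subsetD1 => /andP[].
have E2 : \prod_(j | (inr j != inr v :> I + J) && (j \in v |: T0)) rho t (z v) (z j)
   = \prod_(j in T0) rho t (z v) (z j).
  apply: eq_bigl => j; have -> : (inr j != inr v :> I + J) = (j != v) by [].
  rewrite !inE; case: (eqVneq j v) => [->|] //=; by rewrite (negPf vT).
rewrite E2.
have := @peel_T (A :\ c) v T0 TB vB.
move=> H.
rewrite /Cv.
set P1 := termG _ _ _ _ _ (v |: T0).
have -> : P1 * ((1 - t) * z v * \prod_(j in T0) rho t (z v) (z j)) =
  (1 - t) * z v * (P1 * \prod_(j in T0) rho t (z v) (z j)) by ring.
rewrite H; ring.
Qed.

Lemma resR_inl k (al : nat -> F) b :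
  \sum_(k1 < k) al k1 *
     \sum_(T : {set J} | (T \subset B) && (#|T| == k1)) KT T * (dT T (inl b) * PT T (inl b)) = 0.
Proof.
by apply: big1 => k1 _; rewrite big1 ?mulr0 // => T _; rewrite /dT mul0r mulr0.
Qed.

Lemma resL_notB k v : v \notin B ->
  \sum_(S : {set I} | (S \subset A) && (#|S| == k)) KS S * (dS S (inr v) * PS S (inr v)) = 0.
Proof.
move=> vB; apply: big1 => S _; rewrite /dS (negPf vB).
by case: (c \in S); rewrite mul0r mulr0.
Qed.

Lemma resR_notB k (al : nat -> F) v : v \notin B ->
  \sum_(k1 < k) al k1 *
     \sum_(T : {set J} | (T \subset B) && (#|T| == k1)) KT T * (dT T (inr v) * PT T (inr v)) = 0.
Proof.
move=> vB; apply: big1 => k1 _; rewrite big1 ?mulr0 // => T /andP[TB _].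
rewrite /dT ifN ?mul0r ?mulr0 //; apply: contra vB; exact: (subsetP TB).
Qed.

Lemma ystep k (al : nat -> F) :
  (forall v, v \in B -> FF t y z (A :\ c) (B :\ v) k =
      \sum_(k1 < k.+1) al k1.+1 * GG t y z (A :\ c) (B :\ v) k1) ->
  FF t y z (A :\ c) B k.+1 + t ^+ (#|A| - k.+1) * FF t y z (A :\ c) B k =
      \sum_(k1 < k.+2) al k1 * GG t y z (A :\ c) B k1 ->
  FF t y z A B k.+1 = \sum_(k1 < k.+2) al k1 * GG t y z A B k1.
Proof.
move=> Hres Hinf.
rewrite LHS_exp RHS_exp constL Hinf; congr (_ + _).
apply: eq_bigr => r _; congr (_ / _).
case: r => [b|v].
  by rewrite resL_inl resR_inl.
case: (boolP (v \in B)) => vB.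
  by rewrite resL_inr // resR_inr // Hres.
by rewrite resL_notB // resR_notB.
Qed.

End YStep.

Section Main.
Variable F : fieldType.

Fixpoint gbin (t : F) (N k : nat) : F :=
  match k with
  | 0 => 1
  | k'.+1 => match N with
             | 0 => 0
             | N'.+1 => gbin t N' k'.+1 + t ^+ (N' - k') * gbin t N' k'
             end
  end.

Lemma gbin_gt t N k : (N < k)%N -> gbin t N k = 0.
Proof.
elim: N k => [|N IH] [|k] //= h.
by rewrite !IH ?mulr0 ?addr0 // ltnW.
Qed.

Lemma gbin1 t j : gbin t 1%N j = if (j <= 1)%N then 1 else 0.
Proof.
case: j => [|[|j]] //=.
  by rewrite subnn expr0 mul1r add0r.
by rewrite mulr0 addr0.
Qed.

Lemma inf_pos (t : F) (n m N' k' : nat) (G : nat -> F) (FA FB : F) :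
  n = (m + N'.+1)%N -> (forall k1, (m < k1)%N -> G k1 = 0) ->
  FA = \sum_(k1 < k'.+2) t ^+ ((k'.+1 - k1) * (m - k1)) * gbin t N' (k'.+1 - k1) * G k1 ->
  FB = \sum_(k1 < k'.+1) t ^+ ((k' - k1) * (m - k1)) * gbin t N' (k' - k1) * G k1 ->
  FA + t ^+ (n - k'.+1) * FB =
    \sum_(k1 < k'.+2) t ^+ ((k'.+1 - k1) * (m - k1)) * gbin t N'.+1 (k'.+1 - k1) * G k1.
Proof.
move=> hn hG -> ->.
rewrite big_ord_recr [in RHS]big_ord_recr /= subnn !mul0n !expr0 /=.
rewrite big_distrr /= addrAC -big_split /=; congr (_ + _).
apply: eq_bigr => [[k1 hk1]] _ /=.
have -> : (k'.+1 - k1 = (k' - k1).+1)%N by rewrite subSn.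
set j := (k' - k1)%N.
case: (ltnP m k1) => hm; first by rewrite hG // !mulr0 addr0.
case: (ltnP N' j) => hj.
  have h1 : gbin t N' j = 0 by apply: gbin_gt.
  have h2 : gbin t N' j.+1 = 0 by apply: gbin_gt; apply: ltnW.
  by rewrite h1 h2; ring.
have e : (n - k'.+1 + j * (m - k1) = j.+1 * (m - k1) + (N' - j))%N.
  rewrite /j in hj *; rewrite hn mulSn; move: ((k' - k1) * (m - k1))%N => p; lia.
rewrite mulrDr mulrDl; congr (_ + _).
by rewrite !mulrA -exprD e exprD; ring.
by case: (N').

Qed.


Lemma gbin0 t N : gbin t N 0 = 1.
Proof. by case: N. Qed.

Arguments gbin : simpl never.

Lemma inf_zero (t : F) (a k' : nat) (G' : nat -> F) (FA FB Gt H : F) :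
  t != 0 -> (k'.+1 <= a.+1)%N ->
  (forall j, (a < j)%N -> G' j = 0) ->
  FA = t ^+ (k'.+1 * (a - k'.+1 + a.+1)) * G' k'.+1 ->
  FB = t ^+ (k' * (a - k' + a.+1)) * G' k' ->
  H = t^-1 ^+ (k'.+1 * (a.+1 - k'.+1 + a)) * Gt ->
  H = \sum_(k1 < k'.+2) t^-1 ^+ ((k'.+1 - k1) * (a - k1)) * gbin t^-1 1%N (k'.+1 - k1) * G' k1 ->
  FA + t ^+ (a.+1 - k'.+1) * FB = Gt.
Proof.
move=> t0 hk hG -> -> HGt HH.
have tE : forall e, t ^+ e != 0 by move=> e; rewrite expf_neq0.
have -> : Gt = t ^+ (k'.+1 * (a.+1 - k'.+1 + a)) * H.
  by rewrite HGt mulrA exprVn mulfV ?mul1r.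
rewrite HH big_ord_recr big_ord_recr /= big1 ?add0r; last first.
  move=> [k1 hk1] _; rewrite gbin1 ifN ?mulr0 ?mul0r //=.
  by rewrite -ltnNge; lia.
rewrite subnn gbin0 mul0n expr0 mul1r.
rewrite subSnn gbin1 /= mul1n mulr1.
rewrite mulrDr addrC; congr (_ + _); last first.
  rewrite mul1r; case: (ltnP a k'.+1) => ha; first by rewrite hG // !mulr0.
  by have -> : (a - k'.+1 + a.+1 = a.+1 - k'.+1 + a)%N by lia.
have e : (k'.+1 * (a.+1 - k'.+1 + a) = (a.+1 - k'.+1 + k' * (a - k' + a.+1)) + (a - k'))%N.
  have [b ->] : exists b, a = (k' + b)%N by exists (a - k')%N; lia.
  have -> : ((k' + b).+1 - k'.+1 = b)%N by lia.
  have -> : ((k' + b) - k' = b)%N by lia.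
  nia.
rewrite e !exprD exprVn; field.
by rewrite tE.
Qed.


Definition RHSF t (I J : finType) (y : I -> F) (z : J -> F) (A : {set I}) (B : {set J}) k :=
  \sum_(k1 < k.+1) t ^+ ((k - k1) * (#|B| - k1)) * gbin t (#|A| - #|B|) (k - k1) * GG t y z A B k1.

Lemma main_k0 t (I J : finType) (y : I -> F) (z : J -> F) (A : {set I}) (B : {set J}) :
  FF t y z A B 0 = RHSF t y z A B 0.
Proof.
by rewrite /RHSF FF0 big_ord1 GG0 subnn mul0n expr0 gbin0 !mulr1.
Qed.

Lemma main_empty t (I J : finType) (y : I -> F) (z : J -> F) (A : {set I}) (B : {set J}) k :
  #|A| = 0%N -> (#|B| <= #|A|)%N -> FF t y z A B k = RHSF t y z A B k.
Proof.
move=> A0 BA; case: k => [|k]; first exact: main_k0.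
rewrite FF_gt ?A0 // /RHSF big1 // => [[[|k1] hk1]] _ /=.
  by rewrite gbin_gt ?mulr0 ?mul0r // A0.
by rewrite GG_gt ?mulr0 //; move: BA; rewrite A0; lia.
Qed.

Theorem mainT (n0 : nat) : forall (t : F), t != 0 ->
  forall (I J : finType) (y : I -> F) (z : J -> F),
  injective y -> injective z -> (forall i j, y i != z j) ->
  forall (A : {set I}) (B : {set J}) k,
  (#|A| + #|B| <= n0)%N -> (#|B| <= #|A|)%N ->
  FF t y z A B k = RHSF t y z A B k.
Proof.
elim: n0 => [|n0 IH] t t0 I J y z injy injz yz A B k hs hBA.
  by apply: main_empty => //; lia.
case: (set_0Vmem A) => [A0 | [c cA]].
  by apply: main_empty => //; rewrite A0 cards0.
case: k => [|k']; first exact: main_k0.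
have eA : #|A| = (#|A :\ c|).+1 by rewrite (cardsD1 c A) cA.
rewrite /RHSF.
apply: (@ystep F t I J y z injy injz yz A B c cA k'
  (fun k1 => t ^+ ((k'.+1 - k1) * (#|B| - k1)) * gbin t (#|A| - #|B|) (k'.+1 - k1))).
  move=> v vB.
  have eB : #|B| = (#|B :\ v|).+1 by rewrite (cardsD1 v B) vB.
  rewrite (IH t t0 I J y z injy injz yz (A :\ c) (B :\ v) k'); last first.
  - by move: hBA; rewrite eA eB.
  - by move: hs; rewrite eA eB; lia.
  rewrite /RHSF; apply: eq_bigr => k1 _.
  by rewrite eA eB !subSS.
case: (ltnP #|B| #|A|) => hlt.
  have hB' : (#|B| <= #|A :\ c|)%N by lia.
  have hs' : (#|A :\ c| + #|B| <= n0)%N by lia.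
  rewrite (IH t t0 I J y z injy injz yz (A :\ c) B k'.+1 hs' hB').
  rewrite (IH t t0 I J y z injy injz yz (A :\ c) B k' hs' hB') /RHSF.
  have eN : (#|A| - #|B| = (#|A :\ c| - #|B|).+1)%N by lia.
  rewrite eN.
  apply: (@inf_pos t #|A| #|B| (#|A :\ c| - #|B|) k' (fun k1 => GG t y z (A :\ c) B k1)) => //.
  - by lia.
  - by move=> k1 hk1; apply: GG_gt.
have eB : #|B| = (#|A :\ c|).+1 by lia.
have -> : (#|A| - #|B| = 0)%N by lia.
rewrite big_ord_recr /= big1 ?add0r; last first.
  move=> [k1 hk1] _ /=; rewrite gbin_gt ?mulr0 ?mul0r //; lia.
rewrite subnn mul0n expr0 gbin0 !mul1r.
case: (ltnP #|B| k'.+1) => hk.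
  rewrite FF_gt; last by lia.
  rewrite FF_gt; last by lia.
  by rewrite GG_gt // mulr0 addr0.
rewrite eA.
have tI : t^-1 != 0 by rewrite invr_eq0.
apply: (@inf_zero t #|A :\ c| k' (fun j => GG t^-1 z y B (A :\ c) j) _ _ _
          (FF t^-1 z y B (A :\ c) k'.+1)) => //.
- by rewrite -eB.
- by move=> j hj; apply: GG_gt.
- by rewrite FF_dual // eB.
- by rewrite FF_dual // eB.
- by rewrite FF_dual // invrK eB.
- have yz' : forall j i, z j != y i by move=> j i; rewrite eq_sym.
  rewrite (IH t^-1 tI J I z y injz injy yz' B (A :\ c) k'.+1); first last.
  + by rewrite eB.
  + by move: hs; rewrite eA eB; lia.
  by rewrite /RHSF eB subSn // subnn.
Qed.

End Main.

Section Lam.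
Variable F : fieldType.

Lemma ord0_notin N (S : {set 'I_N}) : (ord0 : 'I_N.+1) \notin [set lift ord0 i | i in S].
Proof.
apply/negP => /imsetP[i _ e].
by move: (neq_lift (ord0 : 'I_N.+1) i); rewrite -e eqxx.
Qed.

Lemma preim_lift N (S : {set 'I_N}) :
  [set i | lift ord0 i \in [set lift (ord0 : 'I_N.+1) i | i in S]] = S.
Proof. by apply/setP => i; rewrite inE mem_imset //; apply: lift_inj. Qed.

Lemma sum_set_ordS (N j : nat) (f : {set 'I_N.+1} -> F) :
  \sum_(S : {set 'I_N.+1} | #|S| == j.+1) f S =
  \sum_(S : {set 'I_N} | #|S| == j.+1) f (lift ord0 @: S) +
  \sum_(S : {set 'I_N} | #|S| == j) f (ord0 |: (lift ord0 @: S)).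
Proof.
rewrite (sum_splitx _ ord0) addrC; congr (_ + _).
  rewrite (reindex_onto (fun S' : {set 'I_N} => lift ord0 @: S')
                        (fun S => [set i | lift ord0 i \in S])) /=.
    apply: eq_bigl => S'.
    by rewrite card_imset ?ord0_notin ?preim_lift ?eqxx ?andbT //; apply: lift_inj.
  move=> S /andP[_ h0]; apply/setP => x; case: (unliftP ord0 x) => [i ->|->].
    by rewrite mem_imset ?inE //; apply: lift_inj.
  by rewrite (negPf h0); apply/negP => /imsetP[i _ e]; move: (neq_lift (ord0 : 'I_N.+1) i); rewrite -e eqxx.
rewrite (reindex_onto (fun S' : {set 'I_N} => ord0 |: (lift ord0 @: S'))
                      (fun S => [set i | lift ord0 i \in S])) /=.
  apply: eq_bigl => S'.
  have -> : [set i | lift ord0 i \in ord0 |: [set lift (ord0 : 'I_N.+1) i | i in S']] = S'.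
    apply/setP => i; rewrite !inE mem_imset //; last by apply: lift_inj.
  by rewrite cardsU1 ord0_notin card_imset ?setU11 ?eqxx ?andbT //; apply: lift_inj.
move=> S /andP[_ h0]; apply/setP => x; rewrite inE; case: (unliftP ord0 x) => [i ->|->].
  rewrite mem_imset ?inE //; last by apply: lift_inj.
by rewrite set11 h0.
Qed.

End Lam.

Arguments gbin : simpl never.

Section Chi.
Variable F : fieldType.

Lemma gbinS (t : F) N k : gbin t N.+1 k.+1 = gbin t N k.+1 + t ^+ (N - k) * gbin t N k.
Proof. by []. Qed.

Lemma chi0 N (s : F) : chiLambda_rho N 0 s = 1.
Proof.
rewrite /chiLambda_rho (big_pred1 set0) ?big_set0 // => S.
by rewrite cards_eq0.
Qed.

Lemma chi_gt N j (s : F) : (N < j)%N -> chiLambda_rho N j s = 0.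
Proof.
move=> h; rewrite /chiLambda_rho big_pred0 // => S; apply/negP => /eqP Sj.
by move: (max_card S); rewrite card_ord Sj leqNgt h.
Qed.

Lemma chi_S N j (s : F) : s != 0 ->
  chiLambda_rho N.+1 j.+1 s =
  s^-1 ^+ j.+1 * chiLambda_rho N j.+1 s + s ^+ N * s^-1 ^+ j * chiLambda_rho N j s.
Proof.
move=> s0; rewrite /chiLambda_rho sum_set_ordS !big_distrr /=; congr (_ + _).
  apply: eq_bigr => S /eqP Sj.
  rewrite big_imset /=; last by move=> a b _ _; apply: lift_inj.
  rewrite -Sj -prodr_const -big_split /=; apply: eq_bigr => i _.
  have -> : ((N.+1)%:Z - 1 - 2 * (lift ord0 i : nat)%:Z = ((N%:Z - 1) - 2 * (i : nat)%:Z) + (-1))%R.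
    by rewrite lift0; lia.
  by rewrite expfzDr // exprN1 mulrC.
apply: eq_bigr => S /eqP Sj.
rewrite big_setU1 /=; last exact: ord0_notin.
rewrite big_imset /=; last by move=> a b _ _; apply: lift_inj.
have -> : ((N.+1)%:Z - 1 - 2 * (nat_of_ord (ord0 : 'I_N.+1))%:Z = N%:Z)%R by rewrite /=; lia.
rewrite -exprnP -Sj -prodr_const -mulrA -big_split /=; congr (_ * _); apply: eq_bigr => i _.
have -> : ((N.+1)%:Z - 1 - 2 * (lift ord0 i : nat)%:Z = ((N%:Z - 1) - 2 * (i : nat)%:Z) + (-1))%R.
  by rewrite lift0; lia.
by rewrite expfzDr // exprN1 mulrC.
Qed.

Lemma chiL (s : F) : s != 0 -> forall N j, (j <= N)%N ->
  s ^+ (j * (N - j)) * chiLambda_rho N j s = gbin (s ^+ 2) N j.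
Proof.
move=> s0; elim=> [|N IH] [|j] //= hj.
- by rewrite chi0 gbin0 mulr1.
- by rewrite chi0 gbin0 mulr1.
rewrite chi_S // gbinS.
have sE : forall e, s ^+ e != 0 by move=> e; rewrite expf_neq0.
rewrite mulrDr; congr (_ + _).
  case: (ltnP j N) => hjN.
    rewrite -IH //.
    have -> : (j.+1 * (N.+1 - j.+1) = j.+1 * (N - j.+1) + j.+1)%N.
      have [a ->] : exists a, N = (j.+1 + a)%N by exists (N - j.+1)%N; lia.
      have -> : ((j.+1 + a).+1 - j.+1 = a.+1)%N by lia.
      have -> : (j.+1 + a - j.+1 = a)%N by lia.
      nia.
    rewrite exprD exprVn; field; by rewrite sE.
  by rewrite chi_gt ?gbin_gt ?mulr0 //; lia.
rewrite -IH; last by lia.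
rewrite !mulrA -exprD.
have -> : (j.+1 * (N.+1 - j.+1) + N = 2 * (N - j) + j * (N - j) + j)%N.
  have [a ->] : exists a, N = (j + a)%N by exists (N - j)%N; lia.
  have -> : ((j + a).+1 - j.+1 = a)%N by lia.
  have -> : (j + a - j = a)%N by lia.
  nia.
rewrite -exprM !exprD exprVn; field; by rewrite sE.
Qed.

End Chi.

Arguments gbin : simpl never.

Section Fin.
Variable F : fieldType.

Lemma hfac_rho (t u v : F) : u != 0 -> v != 0 -> hfac t (u / v) = rho t u v.
Proof.
move=> u0 v0; rewrite /hfac /rho.
have [->|huv] := eqVneq u v.
  by rewrite divff // subrr !invr0 !mulr0 invr1 subrr invr0 mulr0.
have h1 : u - v != 0 by rewrite subr_eq0.
by field; rewrite u0 v0 h1.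
Qed.

Lemma chiX_FF k n m (t q : F) (x : 'I_m -> F) (y : 'I_n -> F) :
  q != 0 -> (forall i, x i != 0) -> (forall j, y j != 0) ->
  chiX k n m t q x y = FF t y (fun i => x i / q) setT setT k.
Proof.
move=> q0 x0 y0; rewrite /chiX /FF; apply: eq_big => [S|S _].
  by rewrite subsetT.
apply: eq_bigr => a _; rewrite mulrC setTD; congr (_ * _).
  by apply: eq_bigr => j _; rewrite hfac_rho.
rewrite [RHS](eq_bigl xpredT) => [|i]; last by rewrite inE.
apply: eq_bigr => i _.
have xq : x i / q != 0 by rewrite mulf_neq0 ?invr_eq0.
by rewrite -hfac_rho //; congr hfac; field; rewrite q0 x0.
Qed.

Lemma chiXv_GG k1 n m (t q : F) (x : 'I_m -> F) (y : 'I_n -> F) :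
  q != 0 -> (forall i, x i != 0) -> (forall j, y j != 0) ->
  chiXv k1 n m t q x y = GG t y (fun i => x i / q) setT setT k1.
Proof.
move=> q0 x0 y0; rewrite /chiXv /GG; apply: eq_big => [S|S _].
  by rewrite subsetT.
have xq : forall i, x i / q != 0 by move=> i; rewrite mulf_neq0 ?invr_eq0.
apply: eq_bigr => a _; rewrite setTD; congr (_ * _).
  apply: eq_bigr => i _; rewrite -hfac_rho //; congr hfac; field.
  by rewrite q0 x0.
rewrite [RHS](eq_bigl xpredT) => [|i]; last by rewrite inE.
apply: eq_bigr => j _.
by rewrite -hfac_rho //; congr hfac; field; rewrite q0 x0.
Qed.

End Fin.

Unset Implicit Arguments.

Theorem theorem2p6 (F : fieldType) (k n m : nat) (s q : F)
    (x : 'I_m -> F) (y : 'I_n -> F) :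
  (m < n)%N -> (1 <= k <= n)%N ->
  s != 0 -> q != 0 ->
  (forall i, x i != 0) -> (forall j, y j != 0) ->
  injective x -> injective y ->
  (forall i j, q * y j != x i) ->
  chiX k n m (s ^+ 2) q x y =
  \sum_(k1 < k.+1 | (k1 <= m)%N && (k - k1 <= n - m)%N)
     s ^+ (2 * ((k - k1) * (m - k1)) + (k - k1) * (n - m - (k - k1)))%N
     * chiLambda_rho (n - m) (k - k1) s
     * chiXv k1 n m (s ^+ 2) q x y.
Proof.
move=> hmn hk s0 q0 x0 y0 injx injy hxy.
set z := fun i => x i / q.
have t0 : s ^+ 2 != 0 by rewrite expf_neq0.
have injz : injective z.
  move=> i j; rewrite /z => e; apply: injx.
  by have := congr1 (fun u => u * q) e; rewrite /= !divfK.
have yz : forall i j, y i != z j.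
  move=> i j; rewrite /z; apply: contra (hxy j i) => /eqP ->.
  by rewrite mulrC divfK.
have cA : #|[set: 'I_n]| = n by rewrite cardsT card_ord.
have cB : #|[set: 'I_m]| = m by rewrite cardsT card_ord.
rewrite chiX_FF // (@mainT F (n + m) (s ^+ 2) t0 _ _ y z injy injz yz); last 2 first.
- by rewrite cA cB.
- by rewrite cA cB; lia.
rewrite /RHSF cA cB [RHS]big_mkcond /=; apply: eq_bigr => k1 _.
case: ifP => [/andP[h1 h2]|h].
  rewrite chiXv_GG // -/z exprD -chiL // exprM mulrA; congr (_ * _).
  by rewrite -!exprM mulnA.
case: (leqP k1 m) => h1.
  rewrite gbin_gt ?mulr0 ?mul0r //.
  by move: h; rewrite h1 /=; move/negbT; rewrite -ltnNge.
by rewrite GG_gt ?mulr0 // cB.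
Qed.
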